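(* Let $g\colon[0,1]\to[0,1]$ be a surjection whose graph $\Gamma=\{(x,g(x))\colon x\in[0,1]\}\subseteq[0,1]^2$ (with the subspace topology of the plane) is connected. Define $f\colon\Gamma\to[0,1]$ by $f(x,g(x))=g(x)$. Then $f$ is a continuous quotient surjection of $\Gamma$ onto $[0,1]$.
   Context: A surjection $f\colon X\to Y$ is a quotient map if for every $G\subseteq Y$, $G$ is open in $Y$ iff $f^{-1}(G)$ is open in $X$. *)

(* Defs.v *)
From HB Require Import structures.
From mathcomp Require Import all_boot all_order all_algebra.
From mathcomp Require Import all_classical all_reals all_analysis.
Set Implicit Arguments. Unset Strict Implicit. Unset Printing Implicit Defensive.
Import Order.TTheory GRing.Theory Num.Theory.
Import numFieldNormedType.Exports.
Local Open Scope classical_set_scope.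
Local Open Scope ring_scope.

Definition open_in {X : topologicalType} (A G : set X) : Prop :=
  exists U : set X, open U /\ G = A `&` U.

Definition quotient_map_on {X Y : topologicalType} (A : set X) (B : set Y)
  (f : X -> Y) : Prop :=
  f @` A = B /\
  forall G : set Y, G `<=` B -> (open_in B G <-> open_in A (A `&` f @^-1` G)).

Definition graph01 {R : realType} (g : R -> R) : set (R * R) :=
  [set p | p.1 \in `[0, 1] /\ p.2 = g p.1].

(* Main.v *)
Require Import Defs.
From HB Require Import structures.
From mathcomp Require Import all_boot all_order all_algebra.
From mathcomp Require Import all_classical all_reals all_analysis.
Import Order.TTheory GRing.Theory Num.Theory.
Import numFieldNormedType.Exports.
Local Open Scope classical_set_scope.
Local Open Scope ring_scope.

Lemma nbhs_fst (R : realType) (p : R * R) (P : R -> Prop) :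
  nbhs p.1 P -> nbhs p (fun q => P q.1).
Proof. move=> h; exact: (@cvg_fst _ _ (nbhs p.1) (nbhs p.2) _ P h). Qed.
Lemma nbhs_snd (R : realType) (p : R * R) (P : R -> Prop) :
  nbhs p.2 P -> nbhs p (fun q => P q.2).
Proof. move=> h; exact: (@cvg_snd _ _ (nbhs p.1) (nbhs p.2) _ P h). Qed.
Arguments nbhs_fst {R} p {P}.
Arguments nbhs_snd {R} p {P}.
Lemma box (R : realType) (p : R * R) (U : set (R*R)) : nbhs p U ->
  exists2 d : R, 0 < d & forall q : R*R, `|q.1 - p.1| < d -> `|q.2 - p.2| < d -> U q.
Proof.
move=> /nbhs_ballP [d d0 H]; exists d => // q h1 h2; apply: H.
split => /=; rewrite /ball /= distrC //.
Qed.

Lemma clopen_conn (T : topologicalType) (E A : set T) : connected E ->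
  (forall p, E p -> nbhs p (fun q => E q -> (A q <-> A p))) ->
  (exists p, E p /\ A p) -> forall p, E p -> A p.
Proof.
move=> cE loc [p0 [Ep0 Ap0]].
have eq : E `&` A = E.
  apply: cE; first by exists p0.
  - exists (interior [set q | E q -> A q]); first exact: open_interior.
    apply/seteqP; split=> p /=.
    + move=> [Ep Ap]; split => //; apply: filterS (loc p Ep) => q h Eq.
      by apply/(h Eq).
    + by move=> [Ep /nbhs_singleton h]; split => //; exact: h.
  - exists (~` interior [set q | E q -> ~ A q]).
      by rewrite closedC; exact: open_interior.
    apply/seteqP; split=> p /=.
    + by move=> [Ep Ap]; split => // /nbhs_singleton h; exact: h Ep Ap.
    + move=> [Ep nI]; split => //; apply: contrapT => nAp; apply: nI.
      apply: filterS (loc p Ep) => q h Eq Aq; exact/nAp/(h Eq).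
move=> p Ep; have : (E `&` A) p by rewrite eq.
by case.
Qed.
From mathcomp Require Import lra.
Section S.
Variable R : realType.
Definition lts (b : bool) (u v : R) := if b then u < v else v < u.
Lemma lts_nbhsl b u c : lts b u c -> nbhs u (fun v => lts b v c).
Proof. by case: b => /=; [exact: lt_nbhsl | exact: lt_nbhsr]. Qed.
Lemma lts_nbhsr b u c : lts b c u -> nbhs u (fun v => lts b c v).
Proof. by case: b => /=; [exact: lt_nbhsr | exact: lt_nbhsl]. Qed.
Lemma lts_asym b u v : lts b u v -> ~ lts b v u.
Proof. by case: b => /= h1 h2; lra. Qed.
Lemma lts_neq b u v : lts b u v -> u <> v.
Proof. by case: b => /= h1 h2; lra. Qed.
Lemma lts_trich b u v : u <> v -> lts b u v \/ lts b v u.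
Proof.
move=> /eqP; rewrite neq_lt; case: b => /= /orP[]; auto.
Qed.
Lemma ltsN b u v : lts (~~ b) u v = lts b v u.
Proof. by case: b. Qed.
Lemma mem01 (x : R) : (x \in `[0, 1]) = (0 <= x <= 1).
Proof. by rewrite in_itv. Qed.
End S.
Arguments lts {R}.
Arguments lts_nbhsl {R b u c}.
Arguments lts_nbhsr {R b u c}.
Arguments lts_asym {R b u v}.
Arguments lts_neq {R b u v}.
Arguments lts_trich {R} b {u v}.
Arguments mem01 {R}.

Lemma darboux (R : realType) (g : R -> R) (b : bool) (a bb c : R) :
  connected (graph01 g) -> 0 <= a -> a < bb -> bb <= 1 ->
  lts b (g a) c -> lts b c (g bb) -> exists w, a < w < bb /\ g w = c.
Proof.
move=> cG a0 abb bb1 ha hb; apply: contrapT => nex.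
have H : forall w, a < w < bb -> g w <> c by move=> w hw e; apply: nex; exists w.
pose A := fun p : R * R => p.1 < a \/ (p.1 <= bb /\ lts b p.2 c).
have := @clopen_conn _ (graph01 g) A cG.
have loc : forall p, graph01 g p -> nbhs p (fun q => graph01 g q -> (A q <-> A p)).
  move=> [x y] [/= x01 ->].
  have [xa|ax] := ltP x a.
    apply: filterS (nbhs_fst (x, g x) (lt_nbhsl xa)) => q /= qa _.
    by split => _; left.
  have [bbx|xbb] := ltP bb x.
    apply: filterS (nbhs_fst (x, g x) (lt_nbhsr bbx)) => q /= qb _.
    rewrite /A /=; split; (case; [move=> ?; lra| case=> ? ?; lra]).
  have gxc : g x <> c.
    move=> e; move: ax xbb; rewrite le_eqVlt => /orP[/eqP ax|ax].
      by move=> _; move: ha; rewrite ax e => /lts_neq.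
    rewrite le_eqVlt => /orP[/eqP xb|xb].
      by move: hb; rewrite -xb e => /lts_neq.
    by apply: (H x) => //; apply/andP.
  case: (lts_trich b gxc) => hx.
  - have xb : x < bb.
      rewrite lt_neqAle xbb andbT; apply/eqP => e; move: hx; rewrite e.
      exact: lts_asym.
    apply: filterS (filterI (nbhs_fst (x, g x) (lt_nbhsl xb)) (nbhs_snd (x, g x) (lts_nbhsl hx))).
    move=> q /= [q1 q2] _; rewrite /A /=; split => _; right; split => //; exact: ltW.
  - have xa : a < x.
      rewrite lt_neqAle ax andbT; apply/eqP => e; move: hx; rewrite -e.
      exact: lts_asym.
    apply: filterS (filterI (nbhs_fst (x, g x) (lt_nbhsr xa)) (nbhs_snd (x, g x) (lts_nbhsr hx))).
    move=> q /= [q1 q2] _; rewrite /A /=; split.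
    + case; [move=> ?; lra| case=> _ h]; exfalso; exact: lts_asym h q2.
    + case; [move=> ?; lra| case=> _ h]; exfalso; exact: lts_asym h hx.
move=> /(_ loc) h.
have : A (bb, g bb).
  apply: h.
    exists (a, g a); split; last by right; split => //=; exact: ltW.
    by split => //=; rewrite mem01 a0 /=; lra.
  by split => //=; rewrite mem01 bb1 andbT; lra.
rewrite /A /=; case; [move=> ?; lra| case=> _ h']; exact: lts_asym h' hb.
Qed.

Lemma nbhs_dist (R : realType) (x e : R) : 0 < e -> nbhs x (fun u => `|u - x| < e).
Proof. by move=> e0; apply/nbhs_ballP; exists e => // u; rewrite /ball /= distrC. Qed.

Theorem mainTheorem7 (R : realType) (g : R -> R) :
  g @` `[0, 1]%classic = `[0, 1]%classic ->
  connected (graph01 g) ->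
  {within graph01 g, continuous (fun p : R * R => p.2)} /\
  quotient_map_on (graph01 g) (`[0, 1]%classic : set R) (fun p : R * R => p.2).
Proof.
move=> surj cG.
have g01 : forall x, x \in `[0, 1] -> g x \in `[0, 1].
  move=> x x01; have : (`[0, 1]%classic : set R) (g x) by rewrite -surj; exists x.
  by [].
have sur : forall y, y \in `[0, 1] -> exists2 x, x \in `[0, 1] & g x = y.
  move=> y y01; have : (g @` `[0, 1]%classic) y by rewrite surj.
  by case=> x hx <-; exists x.
split.
  apply: continuous_subspaceT => p; exact: cvg_snd.
split.
  apply/seteqP; split => y /=.
    by case=> p [p01 ->] <-; exact: g01.
  by move=> /sur [x x01 <-]; exists (x, g x).
move=> G G01; split.
  case=> U [oU ->]; exists ((fun p : R * R => p.2) @^-1` U); split.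
    apply: open_comp => // p _; exact: cvg_snd.
  apply/seteqP; split => p /=.
    by case=> [hp [_ hU]]; split.
  case=> [[p01 pe] hU]; split => //; split => //; rewrite pe; exact: g01.
case=> U [oU eU].
exists (interior [set c | (`[0, 1]%classic : set R) c -> G c]); split.
  exact: open_interior.
apply/seteqP; split; last first.
  by move=> y [y01 /nbhs_singleton h]; exact: h.
move=> y Gy; have y01 : (`[0, 1]%classic : set R) y by exact: G01.
split => //; rewrite /interior /=.
apply: contrapT => nN.
have far : forall e : R, 0 < e -> exists c, `|c - y| < e /\ c \in `[0, 1] /\ ~ G c.
  move=> e e0; apply: contrapT => nc; apply: nN; apply/nbhs_ballP; exists e => //= c.
  rewrite /ball /= distrC => hc hc01; apply: contrapT => nG; apply: nc; exists c; by [].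
have [b side] : exists b, forall e : R, 0 < e ->
    exists c, `|c - y| < e /\ c \in `[0, 1] /\ ~ G c /\ lts b c y.
  case: (pselect (forall e : R, 0 < e ->
    exists c, `|c - y| < e /\ c \in `[0, 1] /\ ~ G c /\ lts true c y)) => [h|nt].
    by exists true.
  exists false => e e0; apply: contrapT => nc; apply: nt => e' e'0.
  have [c [hc [c01 nGc]]] := far (Order.min e e') (ltac:(by rewrite lt_min e0 e'0)).
  move: hc; rewrite lt_min => /andP[hce hce'].
  have cy : c <> y by move=> e1; apply: nGc; rewrite e1.
  case: (lts_trich true cy) => h; first by exists c.
  by exfalso; apply: nc; exists c.
have [z [z01 [gz K]]] : exists z, z \in `[0, 1] /\ g z = y /\
    forall e : R, 0 < e -> exists x, x \in `[0, 1] /\ `|x - z| < e /\ lts b (g x) y.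
  apply: contrapT => nK.
  have nK' : forall z, z \in `[0, 1] -> g z = y -> exists2 e : R, 0 < e &
      forall x, x \in `[0, 1] -> `|x - z| < e -> ~ lts b (g x) y.
    move=> z z01 gz.
    case: (pselect (forall e : R, 0 < e ->
      exists x, x \in `[0, 1] /\ `|x - z| < e /\ lts b (g x) y)) => [h|nf].
      by exfalso; apply: nK; exists z.
    move/existsNP: nf => [e /not_implyP [e0 nx]].
    exists e => // x x01 xz hl; apply: nx; exists x; by [].
  pose A := fun p : R * R => ~ lts b p.2 y.
  have loc : forall p, graph01 g p -> nbhs p (fun q => graph01 g q -> (A q <-> A p)).
    move=> [x v] [/= x01 ->].
    case: (pselect (g x = y)) => [gxy|gxy].
      have [e e0 he] := nK' x x01 gxy.
      apply: filterS (nbhs_fst (x, g x) (@nbhs_dist _ x e e0)) => q /= hq [q01 qe].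
      rewrite /A /= gxy qe; split => _; last exact: he.
      by move=> /lts_neq.
    case: (lts_trich b gxy) => hx.
    - apply: filterS (nbhs_snd (x, g x) (lts_nbhsl hx)) => q /= hq _.
      by rewrite /A /=; split => h; exfalso; apply: h.
    - apply: filterS (nbhs_snd (x, g x) (lts_nbhsr hx)) => q /= hq _.
      by rewrite /A /=; split => _; apply: lts_asym.
  have := @clopen_conn _ _ A cG loc.
  have [x0 x001 gx0] := sur y y01.
  have ex : exists p, graph01 g p /\ A p.
    exists (x0, y); split; first by split => //=; rewrite gx0.
    by rewrite /A /= => /lts_neq.
  move=> /(_ ex) hall.
  have [c [_ [c01 [_ hc]]]] := side 1 ltr01.
  have [x x01 gx] := sur c c01.
  by apply: (hall (x, c)) => //=; split => //=; rewrite gx.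
have : (graph01 g `&` (fun p : R * R => p.2) @^-1` G) (z, y).
  by split => //; split => //=; rewrite gz.
rewrite eU => -[_ Uzy].
move: oU; rewrite openE => /(_ _ Uzy) nU.
have [d d0 hd] := @box _ (z, y) U nU.
have [x [x01 [xz hx]]] := K d d0.
have gxy : g x <> y by exact: lts_neq hx.
have n0 : 0 < `|g x - y| by rewrite normr_gt0 subr_eq0; apply/eqP.
have [c [hc [c01 [nGc hcy]]]] := side (Order.min d `|g x - y|) (ltac:(by rewrite lt_min d0 n0)).
move: hc; rewrite lt_min => /andP[hcd hcg].
have hxc : lts b (g x) c.
  move: hx hcy hcg; case: b side K => /= _ _ hx hcy.
    by rewrite !ltr0_norm ?subr_lt0 //; lra.
  by rewrite !gtr0_norm ?subr_gt0 //; lra.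
have [w [hw gw]] : exists w, ((x < w < z) \/ (z < w < x)) /\ g w = c.
  move: x01 z01; rewrite !mem01 => /andP[x0 x1] /andP[z0 z1].
  have xz' : x <> z by move=> e; apply: gxy; rewrite e.
  move/eqP: xz'; rewrite neq_lt => /orP[lxz|lzx].
    have [w [hw gw]] := @darboux _ g b x z c cG x0 lxz z1 hxc (ltac:(by rewrite gz)).
    by exists w; split => //; left.
  have h1 : lts (~~ b) (g z) c by rewrite ltsN gz.
  have h2 : lts (~~ b) c (g x) by rewrite ltsN.
  have [w [hw gw]] := @darboux _ g (~~ b) z x c cG z0 lzx x1 h1 h2.
  by exists w; split => //; right.
have : (graph01 g `&` (fun p : R * R => p.2) @^-1` G) (w, c).
  rewrite eU; move: x01 z01 xz; rewrite !mem01 ltr_distl.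
  move=> /andP[x0 x1] /andP[z0 z1] /andP[xz1 xz2].
  split.
    split => //=; rewrite mem01.
    by case: hw => /andP[? ?]; apply/andP; split; lra.
  apply: hd => /=; last by rewrite -gz in hcd *.
  by rewrite ltr_distl; case: hw => /andP[? ?]; apply/andP; split; lra.
by case=> _ /=.
Qed.
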